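(* Let $\mathcal{F}$ be a hypergraph and $\mathcal{M}$ a matching of $\mathcal{F}$. Then $\mathcal{M}$ is a maximum matching if and only if there is no $\mathcal{M}$-augmenting set in $\mathcal{F}$.
   Context: A hypergraph (set system) $\mathcal{F}$ is a finite collection of distinct subsets of a vertex set (no uniformity is assumed). A matching is a collection of pairwise disjoint members of $\mathcal{F}$; it is maximum if no matching of $\mathcal{F}$ has more members. For $\mathcal{C}\subseteq\mathcal{F}$, write $X_{\mathcal{C}}=\bigcup_{A\in\mathcal{C}}A$ and $\mathcal{C}_x=\{A\in\mathcal{C}:x\in A\}$. Given a matching $\mathcal{M}$, a subfamily $\mathcal{C}\subseteq\mathcal{F}$ is an $\mathcal{M}$-augmenting set if: (1) $|\mathcal{M}\cap\mathcal{C}|<|\mathcal{C}\setminus\mathcal{M}|$; (2) whenever $B\in\mathcal{M}$ and $B\cap A\neq\emptyset$ for some $A\in\mathcal{C}$, then $B\in\mathcal{C}$; (3) $|\mathcal{C}_x\setminus\mathcal{M}|\leq 1$ for every $x\in X_{\mathcal{C}}$ (i.e., the members of $\mathcal{C}\setminus\mathcal{M}$ are pairwise disjoint). *)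

(* Defs.v *)
From mathcomp Require Import all_boot.
Set Implicit Arguments. Unset Strict Implicit. Unset Printing Implicit Defensive.

(* A hypergraph on a finite vertex set T is a set F : {set {set T}} of
   distinct subsets of T. *)

Definition is_matching (T : finType) (F M : {set {set T}}) : Prop :=
  M \subset F /\
  (forall A B, A \in M -> B \in M -> A != B -> [disjoint A & B]).

Definition is_maximum_matching (T : finType) (F M : {set {set T}}) : Prop :=
  is_matching F M /\ (forall N, is_matching F N -> #|N| <= #|M|).

Definition XC (T : finType) (C : {set {set T}}) : {set T} := \bigcup_(A in C) A.

Definition Cx (T : finType) (C : {set {set T}}) (x : T) : {set {set T}} :=
  [set A in C | x \in A].

Definition is_augmenting (T : finType) (F M C : {set {set T}}) : Prop :=
  [/\ C \subset F,
      #|M :&: C| < #|C :\: M|,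
      (forall B A, B \in M -> A \in C -> B :&: A != set0 -> B \in C)
    & (forall x, x \in XC C -> #|Cx C x :\: M| <= 1)].

(* Main.v *)
Require Import Defs.
From mathcomp Require Import all_boot zify.

Lemma cond3_disj (T : finType) (M C : {set {set T}}) :
  (forall x, x \in XC C -> #|Cx C x :\: M| <= 1) ->
  forall A B, A \in C :\: M -> B \in C :\: M -> A != B -> [disjoint A & B].
Proof.
move=> H A B HA HB nAB; rewrite -setI_eq0; apply/negPn/negP.
case/set0Pn=> x; rewrite inE => /andP [xA xB].
have xX : x \in XC C.
  apply/bigcupP; exists A => //; by move: HA; rewrite inE => /andP [].
have := H x xX; move/card_le1_eqP=> H2.
have: A = B.
  move: HA HB; rewrite !inE => /andP [nAM AC] /andP [nBM BC].
  by apply: H2; rewrite !inE ?nAM ?nBM ?AC ?BC ?xA ?xB.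
by move/eqP; rewrite (negbTE nAB).
Qed.

Lemma disj_cond3 (T : finType) (M C : {set {set T}}) :
  (forall A B, A \in C :\: M -> B \in C :\: M -> A != B -> [disjoint A & B]) ->
  (forall x, x \in XC C -> #|Cx C x :\: M| <= 1).
Proof.
move=> H x _; apply/card_le1_eqP => A B.
rewrite !inE => /andP [nAM /andP [AC xA]] /andP [nBM /andP [BC xB]].
apply/eqP; apply/negPn/negP => nAB.
have := H A B; rewrite !inE nAM AC nBM BC => /(_ erefl erefl); rewrite eq_sym => /(_ nAB).
rewrite -setI_eq0 => /eqP E.
have : x \in A :&: B by rewrite inE xA xB.
by rewrite E inE.
Qed.

Theorem lemma1 (T : finType) (F M : {set {set T}}) :
  is_matching F M ->
  (is_maximum_matching F M <-> ~ (exists C, is_augmenting F M C)).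
Proof.
move=> [MF Mdisj]; split.
- move=> [_ Hmax] [C [CF Hcard H2 H3]].
  pose N := (M :\: C) :|: (C :\: M).
  have HN : is_matching F N.
    split.
      apply/subsetP=> A; rewrite !inE => /orP [/andP [_ AM]|/andP [_ AC]].
        exact: (subsetP MF).
      exact: (subsetP CF).
    move=> A B; rewrite !inE => /orP [/andP [nAC AM]|/andP [nAM AC]]
      /orP [/andP [nBC BM]|/andP [nBM BC]] nAB.
    + exact: Mdisj.
    + rewrite -setI_eq0; apply/negPn/negP => hne.
      by have := H2 A B AM BC hne; rewrite (negbTE nAC).
    + rewrite -setI_eq0 setIC; apply/negPn/negP => hne.
      by have := H2 B A BM AC hne; rewrite (negbTE nBC).
    + apply: (@cond3_disj T M C H3 A B) nAB; by rewrite inE ?nAM ?nBM ?AC ?BC.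
  have := Hmax N HN.
  have -> : #|N| = #|M :\: C| + #|C :\: M|.
    rewrite cardsU.
    have -> : (M :\: C) :&: (C :\: M) = set0.
      apply/setP=> A; rewrite !inE; by case: (A \in M); case: (A \in C).
    by rewrite cards0 subn0.
  rewrite -(cardsID C M); move: Hcard; lia.
- move=> Hno; split => // N [NF Ndisj].
  rewrite leqNgt; apply/negP => Hlt; apply: Hno.
  exists ((N :\: M) :|: (M :\: N)); split.
  + apply/subsetP=> A; rewrite !inE => /orP [/andP [_ AN]|/andP [_ AM]].
      exact: (subsetP NF).
    exact: (subsetP MF).
  + have -> : M :&: ((N :\: M) :|: (M :\: N)) = M :\: N.
      apply/setP=> A; rewrite !inE; by case: (A \in M); case: (A \in N).
    have -> : ((N :\: M) :|: (M :\: N)) :\: M = N :\: M.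
      apply/setP=> A; rewrite !inE; by case: (A \in M); case: (A \in N).
    move: Hlt; rewrite -(cardsID N M) -(cardsID M N) (setIC M N); lia.
  + move=> B A BM; rewrite !inE => /orP [/andP [nAM AN]|/andP [nAN AM]] hne;
      case BN: (B \in N); rewrite ?BM ?orbT //=.
    * have nAB : A != B by apply/eqP=> E; rewrite E BM in nAM.
      by move: hne; rewrite setIC setI_eq0 (Ndisj A B AN BN nAB).
    * have nAB : A != B by apply/eqP=> E; rewrite E BN in nAN.
      by move: hne; rewrite setIC setI_eq0 (Mdisj A B AM BM nAB).
  + apply: disj_cond3 => A B; rewrite !inE.
    move=> /andP [nAM /orP [/andP [_ AN]|/andP [_ AM]]]; last by rewrite AM in nAM.
    move=> /andP [nBM /orP [/andP [_ BN]|/andP [_ BM]]]; last by rewrite BM in nBM.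
    exact: Ndisj.
Qed.
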